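(* Let $\mu,\nu$ be Borel probability measures on $[0,1)$ with $\nu$ dyadically doubling ($\nu(\hat I)\le D_\nu\nu(I)$ for $I\in\mathcal{D}\setminus\{[0,1)\}$). Let $I_0=[0,1)\supset I_1\supset I_2\supset\cdots$ be nested intervals with $I_j\in\mathcal{D}$ of length $2^{-j}$, and for $j\ge0$ let $\psi_j\colon\mathbb{R}\to[0,\infty)$ be $L_j$-Lipschitz and supported on $\overline{I_j}$, such that $\Psi := \sum_{j\ge0}\psi_j$ is bounded. Set $\Psi_k := \sum_{j\ge k}\psi_j$. Then for every $N\in\{0,1,2,\ldots\}\cup\{\infty\}$, $$\Big|\int\Psi\,d\mu-\int\Psi\,d\nu\Big|\le\sum_{k=0}^N\frac{L_k}{2^k}\alpha_{\mu,\nu}(I_k)\mu(I_k)+\sum_{k=0}^N\Big(\frac{1}{\nu(I_{k+1})}\int\Psi_{k+1}\,d\nu\Big)\Delta_{\mu,\nu}(I_k)\mu(I_k)+2\|\Psi\|_\infty\,\mu(I_{N+1}),$$ where for $N=\infty$, $I_{N+1}$ means $\bigcap_j I_j$.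
   Context: $\mathcal{D}$: dyadic intervals $[j2^{-k},(j+1)2^{-k})\subset[0,1)$, $k\ge0$; $\hat I$ is the parent of $I$, and $I_-$ is the left half of $I$. $\Delta_{\mu,\nu}(I) := |\mu(I_-)/\mu(I)-\nu(I_-)/\nu(I)|$, with the convention that $\Delta_{\mu,\nu}(I)\mu(I):=0$ if $\mu(I)=0$. Wasserstein distance: $\mathbb{W}_1(\nu_1,\nu_2) := \sup_\psi |\int\psi\,d\nu_1 - \int\psi\,d\nu_2|$ over all $1$-Lipschitz $\psi\colon\mathbb{R}\to\mathbb{R}$ supported on $[0,1]$. $T_I$ is the increasing affine map from $\overline I$ onto $[0,1]$, $\mu_I := T_{I\sharp}(\mu|_I)/\mu(I)$, $\nu_I := T_{I\sharp}(\nu|_I)/\nu(I)$ (zero if the mass vanishes), $\alpha_{\mu,\nu}(I) := \mathbb{W}_1(\mu_I,\nu_I)$. *)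

(* Defs.v *)
From HB Require Import structures.
From mathcomp Require Import all_boot all_order all_algebra.
From mathcomp Require Import all_classical all_reals all_analysis.
Set Implicit Arguments. Unset Strict Implicit. Unset Printing Implicit Defensive.
Import Order.TTheory GRing.Theory Num.Theory.
Import numFieldNormedType.Exports.
Local Open Scope classical_set_scope.
Local Open Scope ring_scope.

Section Defs.
Variable R : realType.

(* the dyadic interval [m 2^-k, (m+1) 2^-k) ; it lies in [0,1) iff m < 2^k *)
Definition dyadic (k m : nat) : set R :=
  [set x : R | (m%:R / 2 ^+ k <= x) && (x < m.+1%:R / 2 ^+ k)].

Definition mR (mu : set R -> \bar R) (A : set R) : R := fine (mu A).

(* Delta_{mu,nu}(I) for I = dyadic k m; its left half I_- is dyadic k.+1 (2m).
   Division by 0 is 0 in MathComp, so Delta(I) * mu(I) = 0 when mu(I) = 0. *)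
Definition Delta (mu nu : probability R R) (k m : nat) : R :=
  `| mR mu (dyadic k.+1 m.*2) / mR mu (dyadic k m)
   - mR nu (dyadic k.+1 m.*2) / mR nu (dyadic k m) |.

Definition W1_test (psi : R -> R) : Prop :=
  (forall x y : R, `|psi x - psi y| <= `|x - y|) /\
  (forall x : R, ~ (0 <= x <= 1) -> psi x = 0).

(* integral of psi against mu_I = T_I#(mu|_I)/mu(I), I = dyadic k m,
   T_I x = 2^k x - m (increasing affine map from closure I onto [0,1]);
   by definition of the push-forward this is
   mu(I)^-1 * \int_I psi(T_I x) dmu(x)   (and 0 if mu(I) = 0). *)
Definition int_local (mu : probability R R) (k m : nat) (psi : R -> R) : R :=
  (mR mu (dyadic k m))^-1 *
  fine (\int[mu]_(x in dyadic k m) (psi (2 ^+ k * x - m%:R))%:E)%E.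

(* alpha_{mu,nu}(I) = W_1(mu_I, nu_I) *)
Definition alpha (mu nu : probability R R) (k m : nat) : R :=
  sup [set `|int_local mu k m psi - int_local nu k m psi| | psi in W1_test].

Definition Psi_from (psi : nat -> R -> R) (k : nat) (x : R) : R :=
  fine (\sum_(k <= j <oo) (psi j x)%:E)%E.

Definition supnorm (f : R -> R) : R := sup [set `|f x| | x in [set: R]].

Definition intR (mu : probability R R) (f : R -> R) : R :=
  fine (\int[mu]_x (f x)%:E)%E.

End Defs.

(* Main.v *)
Require Import Defs.
From HB Require Import structures.
From mathcomp Require Import all_boot all_order all_algebra.
From mathcomp Require Import all_classical all_reals all_analysis.
From mathcomp Require Import ring lra zify measurable_realfun.
Set Implicit Arguments. Unset Strict Implicit. Unset Printing Implicit Defensive.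
Import Order.TTheory GRing.Theory Num.Theory.
Import numFieldNormedType.Exports.
Local Open Scope classical_set_scope.
Local Open Scope ring_scope.

Lemma lip_cont (R : realType) (f : R -> R) (L : R) :
  (forall x y, `|f x - f y| <= L * `|x - y|) -> continuous f.
Proof.
move=> Hf x; apply/cvgrPdist_lt => e e0.
have L1 : 0 < `|L| + 1 by rewrite ltr_pwDr.
near=> y.
apply: (le_lt_trans (Hf x y)).
apply: (le_lt_trans (y := (`|L| + 1) * `|x - y|)).
  have L0 : 0 <= L.
    by have := Hf 0 1; rewrite sub0r normrN normr1 mulr1; apply: le_trans.
  apply: ler_pM => //.
  by rewrite (le_trans (ler_norm L)) // lerDl.
rewrite -ltr_pdivlMl //.
near: y; apply: cvgr_dist_lt => //.
by rewrite mulr_gt0 // invr_gt0.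
Unshelve. all: by end_near. Qed.

Lemma dyadicE (R : realType) k m :
  dyadic (R:=R) k m = `[m%:R / 2 ^+ k, m.+1%:R / 2 ^+ k[%classic.
Proof. by apply/seteqP; split => x /=; rewrite in_itv. Qed.

Lemma dyadic_meas (R : realType) k m : measurable (dyadic (R:=R) k m).
Proof. by rewrite dyadicE; exact: measurable_itv. Qed.

Lemma mR_ge0 (R : realType) (mu : probability R R) A : 0 <= mR mu A.
Proof. by rewrite /mR fine_ge0. Qed.

Lemma mRE (R : realType) (mu : probability R R) A : measurable A ->
  (mR mu A)%:E = mu A.
Proof. by move=> mA; rewrite /mR fineK // fin_num_measure. Qed.

Lemma mR_le1 (R : realType) (mu : probability R R) A : measurable A -> mR mu A <= 1.
Proof. by move=> mA; rewrite -lee_fin mRE // probability_le1. Qed.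

Lemma closure_dyadic (R : realType) k m :
  closure (dyadic (R:=R) k m) `<=` `[m%:R / 2 ^+ k, m.+1%:R / 2 ^+ k]%classic.
Proof.
have sub : dyadic (R:=R) k m `<=` `[m%:R / 2 ^+ k, m.+1%:R / 2 ^+ k]%classic.
  by rewrite dyadicE => x /=; rewrite !in_itv /= => /andP[-> /ltW ->].
move=> x cx; have := closureS sub cx.
by rewrite -(closure_id _).1 //; exact: interval_closed.
Qed.

Lemma lip_ge0 (R : realType) (f : R -> R) (L : R) :
  (forall x y, `|f x - f y| <= L * `|x - y|) -> 0 <= L.
Proof.
by move=> Hf; have := Hf 0 1; rewrite sub0r normrN normr1 mulr1; apply: le_trans.
Qed.

Lemma zero_off (R : realType) (f : R -> R) (L : R) k m :
  (forall x y, `|f x - f y| <= L * `|x - y|) ->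
  (forall x, ~ closure (dyadic (R:=R) k m) x -> f x = 0) ->
  forall x, ~ dyadic (R:=R) k m x -> f x = 0.
Proof.
move=> Hf Hz x nx.
have out y : (y < m%:R/2^+k) || (m.+1%:R/2^+k < y) -> f y = 0.
  move=> hy; apply: Hz => /closure_dyadic /=; rewrite in_itv /= => /andP[h1 h2].
  by move: hy; rewrite ltNge h1 /= ltNge h2.
have L0 := lip_ge0 Hf.
case: (ltP x (m%:R/2^+k)) => hx; first by apply: out; rewrite hx.
have hb : m.+1%:R/2^+k <= x.
  rewrite leNgt; apply/negP => hb; apply: nx; by rewrite /dyadic /= hx hb.
apply/normr0_eq0/eqP; rewrite eq_le normr_ge0 andbT.
apply/ler_addgt0Pr => e e0; rewrite add0r.
have L1 : 0 < L + 1 by lra.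
have ee : 0 < e / (L + 1) by rewrite divr_gt0.
have := Hf x (x + e / (L+1)).
rewrite (out (x + e/(L+1))); last by rewrite orbC (le_lt_trans hb) // ltrDl.
rewrite subr0 => h; apply: le_trans h _.
rewrite opprD addrA subrr sub0r normrN ger0_norm; last exact: ltW.
rewrite mulrA ler_pdivrMr //; nra.
Qed.

Section series.
Local Open Scope ereal_scope.

Lemma ser_step (R : realType) (f : nat -> R) k : (forall j, (0 <= f j)%R) ->
  \sum_(k <= j <oo) (f j)%:E = (f k)%:E + \sum_(k.+1 <= j <oo) (f j)%:E.
Proof.
move=> f0; rewrite (@nneseries_split _ _ k 1); last by move=> j _; rewrite lee_fin.
by rewrite addn1 big_nat1.
Qed.

Lemma ser_ge0 (R : realType) (f : nat -> R) k : (forall j, (0 <= f j)%R) ->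
  0 <= \sum_(k <= j <oo) (f j)%:E.
Proof. by move=> f0; apply: nneseries_ge0 => j _ _; rewrite lee_fin. Qed.

Lemma ser_le0 (R : realType) (f : nat -> R) k : (forall j, (0 <= f j)%R) ->
  \sum_(k <= j <oo) (f j)%:E <= \sum_(0 <= j <oo) (f j)%:E.
Proof.
move=> f0; rewrite [X in _ <= X](@nneseries_split _ _ 0 k); last by move=> j _; rewrite lee_fin.
by rewrite add0n leeDr //; apply: sume_ge0 => j _; rewrite lee_fin.
Qed.

End series.

Section integ.
Local Open Scope ereal_scope.
Variables (R : realType) (mu : probability R R).

Lemma int_fin (f : R -> R) (M : R) : measurable_fun setT f ->
  (forall x, 0 <= f x <= M)%R ->
  \int[mu]_x (f x)%:E = (intR mu f)%:E /\ (0 <= intR mu f)%R.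
Proof.
move=> mf fb.
have mf' : measurable_fun setT (fun x => (f x)%:E) by exact/measurable_EFinP.
have i0 : 0 <= \int[mu]_x (f x)%:E.
  by apply: integral_ge0 => x _; rewrite lee_fin; case/andP: (fb x).
have iM : \int[mu]_x (f x)%:E <= M%:E.
  apply: (le_trans (ge0_le_integral _ _ _ _ (f2 := cst M%:E) _ _)) => //;
    try by move=> x _; rewrite lee_fin; case/andP: (fb x).
  rewrite integral_cst //; rewrite -[X in _ <= X]mule1; apply: lee_wpmul2l.
    by rewrite lee_fin; case/andP: (fb 0%R) => h1 h2; apply: le_trans h2.
  exact: probability_le1.
have fin : \int[mu]_x (f x)%:E \is a fin_num by rewrite ge0_fin_numE // (le_lt_trans iM) // ltry.
by rewrite /intR fineK //; split => //; rewrite fine_ge0.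
Qed.

Lemma int_off (f : R -> R) (M : R) (D : set R) : measurable D ->
  measurable_fun setT f -> (forall x, 0 <= f x <= M)%R ->
  (forall x, ~ D x -> f x = 0%R) ->
  \int[mu]_(x in D) (f x)%:E = \int[mu]_x (f x)%:E /\
  (intR mu f <= M * mR mu D)%R.
Proof.
move=> mD mf fb f0.
have E : \int[mu]_(x in D) (f x)%:E = \int[mu]_x (f x)%:E.
  rewrite integral_mkcond; apply: eq_integral => x _; rewrite /patch.
  case: ifPn => // /negP xD; rewrite f0 //; by move=> Dx; apply: xD; rewrite inE.
split => //.
have [i1 i2] := int_fin mf fb.
rewrite -lee_fin -i1 -E EFinM mRE //.
apply: (le_trans (ge0_le_integral _ _ _ _ (f2 := cst M%:E) _ _)) => //;
  try by move=> x _; rewrite lee_fin; case/andP: (fb x).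
  by apply/measurable_EFinP; exact: (measurable_funS measurableT _ mf).
by rewrite integral_cst.
Qed.

Lemma int_add (f g h : R -> R) (M : R) :
  measurable_fun setT g -> measurable_fun setT h ->
  (forall x, 0 <= g x <= M)%R -> (forall x, 0 <= h x <= M)%R ->
  (forall x, f x = g x + h x)%R ->
  intR mu f = (intR mu g + intR mu h)%R.
Proof.
move=> mg mh gb hb fE.
have [ig _] := int_fin mg gb; have [ih _] := int_fin mh hb.
rewrite /intR; under eq_integral do rewrite fE EFinD.
rewrite ge0_integralD //.
- by rewrite ig ih.
- by move=> x _; rewrite lee_fin; case/andP: (gb x).
- exact/measurable_EFinP.
- by move=> x _; rewrite lee_fin; case/andP: (hb x).
- exact/measurable_EFinP.
Qed.

End integ.

Record Hyp (R : realType) (c : nat -> nat) (psi : nat -> R -> R) (L : nat -> R)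
  (M : R) : Prop := {
  h_c : forall j, (c j < 2 ^ j)%N;
  h_nest : forall j, dyadic (R:=R) j.+1 (c j.+1) `<=` dyadic (R:=R) j (c j);
  h_pos : forall j x, 0 <= psi j x;
  h_lip : forall j x y, `|psi j x - psi j y| <= L j * `|x - y|;
  h_supp : forall j x, ~ closure (dyadic (R:=R) j (c j)) x -> psi j x = 0;
  h_bd : forall x, (\sum_(0 <= j <oo) (psi j x)%:E <= M%:E)%E }.

Section PsiFacts.
Variables (R : realType) (c : nat -> nat) (psi : nat -> R -> R) (L : nat -> R) (M : R).
Hypothesis H : Hyp c psi L M.

Lemma ser_fin k x : (\sum_(k <= j <oo) (psi j x)%:E)%E \is a fin_num.
Proof.
have p0 := h_pos H.
rewrite ge0_fin_numE; last exact: ser_ge0.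
by apply: (le_lt_trans (ser_le0 _ _)) => //; apply: (le_lt_trans (h_bd H x)); rewrite ltry.
Qed.

Lemma Psi_E k x : (Psi_from psi k x)%:E = (\sum_(k <= j <oo) (psi j x)%:E)%E.
Proof. by rewrite /Psi_from fineK // ser_fin. Qed.

Lemma Psi_step k x : Psi_from psi k x = psi k x + Psi_from psi k.+1 x.
Proof.
apply: EFin_inj; rewrite EFinD !Psi_E; apply: ser_step => j; exact: (h_pos H).
Qed.

Lemma Psi_le0 k x : 0 <= Psi_from psi k x <= Psi_from psi 0 x.
Proof.
rewrite -!lee_fin !Psi_E; apply/andP; split; first by apply: ser_ge0 => j; exact: (h_pos H).
by apply: ser_le0 => j; exact: (h_pos H).
Qed.

Lemma Psi_bd k x : 0 <= Psi_from psi k x <= M.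
Proof.
case/andP: (Psi_le0 k x) => -> /le_trans; apply.
by rewrite -lee_fin Psi_E; exact: (h_bd H).
Qed.

Lemma psi_bd k x : 0 <= psi k x <= M.
Proof.
rewrite (h_pos H) /=; case/andP: (Psi_bd k x) => _; apply: le_trans.
by rewrite Psi_step lerDl; case/andP: (Psi_bd k.+1 x).
Qed.

Lemma psi_meas k : measurable_fun setT (psi k).
Proof. apply: continuous_measurable_fun; exact: lip_cont (h_lip H k). Qed.

Lemma Psi_meas k : measurable_fun setT (Psi_from psi k).
Proof.
apply/measurable_EFinP.
have -> : EFin \o Psi_from psi k = fun x => (\sum_(j <oo | (k <= j)%N) (psi j x)%:E)%E.
  apply/funext => x /=; rewrite Psi_E.
  by rewrite (@eseries_cond _ _ xpredT).
apply: ge0_emeasurable_sum => //.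
- by move=> j x _ _; rewrite lee_fin (h_pos H).
- by move=> j _; apply/measurable_EFinP; exact: psi_meas.
Qed.

Lemma nested k j : (k <= j)%N -> dyadic (R:=R) j (c j) `<=` dyadic (R:=R) k (c k).
Proof.
elim: j => [|j IH]; first by rewrite leqn0 => /eqP ->.
rewrite leq_eqVlt => /orP[/eqP -> //|/IH h].
by move=> y /(h_nest H) /h.
Qed.

Lemma psi_off k x : ~ dyadic (R:=R) k (c k) x -> psi k x = 0.
Proof. exact: (zero_off (h_lip H k) (@h_supp _ _ _ _ _ H k)). Qed.

Lemma Psi_off k x : ~ dyadic (R:=R) k (c k) x -> Psi_from psi k x = 0.
Proof.
move=> nx; apply: EFin_inj; rewrite Psi_E; apply: eseries0 => j kj _.
by rewrite psi_off // => /(nested kj).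
Qed.

End PsiFacts.

Lemma W1_bound (R : realType) (g : R -> R) : W1_test g -> forall y, `|g y| <= 2.
Proof.
case=> lg sg y.
have g2 : g 2 = 0 by apply: sg => /andP[_ h]; lra.
case: (boolP (0 <= y <= 1)) => hy; last by rewrite sg ?normr0 // => h; move: hy; rewrite h.
have := lg y 2; rewrite g2 subr0 => /le_trans; apply.
case/andP: hy => h0 h1; rewrite ler0_norm; last by lra.
lra.
Qed.

Lemma W1_meas (R : realType) (g : R -> R) (k m : nat) : W1_test g ->
  measurable_fun setT (fun x : R => g (2 ^+ k * x - m%:R)).
Proof.
case=> lg _; apply: continuous_measurable_fun.
apply: (@lip_cont _ _ (2 ^+ k)) => x y.
apply: le_trans (lg _ _) _.
rewrite opprB addrA subrK -mulrBr normrM ger0_norm //.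
Qed.

Lemma int_local_bound (R : realType) (mu : probability R R) k m g :
  W1_test g -> `|int_local mu k m g| <= 2.
Proof.
move=> Wg.
have mI := dyadic_meas (R:=R) k m.
set a := mR mu (dyadic k m).
have a0 : 0 <= a by exact: mR_ge0.
set z := (\int[mu]_(x in dyadic k m) (g (2 ^+ k * x - m%:R))%:E)%E.
have mh : measurable_fun (dyadic k m) (fun x : R => (g (2 ^+ k * x - m%:R))%:E).
  apply/measurable_EFinP; exact: (measurable_funS measurableT _ (W1_meas k m Wg)).
have zb : (`|z| <= (2 * a)%:E)%E.
  apply: (le_trans (le_abse_integral _ _ mh)) => //.
  apply: (le_trans (ge0_le_integral _ _ _ _ (f2 := cst 2%:E) _ _)) => //.
  - exact: measurableT_comp.
  - by move=> x _; rewrite /= lee_fin; exact: W1_bound.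
  - by rewrite integral_cst // EFinM /a mRE.
have zfin : z \is a fin_num.
  by rewrite fin_numE; apply/andP; split; apply/eqP => zE; move: zb; rewrite zE.
rewrite /int_local -/a -/z.
have fz : `|fine z| <= 2 * a.
  by move: zb; rewrite -(fineK zfin) /= lee_fin.
have [->|an0] := eqVneq a 0; first by rewrite invr0 mul0r normr0.
rewrite normrM ger0_norm ?invr_ge0 // ler_pdivrMl ?lt_neqAle ?an0 //; lra.
Qed.

Lemma alpha_ub (R : realType) (mu nu : probability R R) k m g : W1_test g ->
  `|int_local mu k m g - int_local nu k m g| <= alpha mu nu k m.
Proof.
move=> Wg; apply: ub_le_sup; last by exists g.
exists 4 => _ [h Wh <-].
apply: (le_trans (ler_normB _ _)).
have := int_local_bound mu k m Wh; have := int_local_bound nu k m Wh; lra.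
Qed.

Lemma W1_0 (R : realType) : W1_test (fun _ : R => 0).
Proof. by split => [x y|x _]; rewrite ?subrr ?normr0. Qed.

Lemma int_local0 (R : realType) (mu : probability R R) k m :
  int_local mu k m (fun _ => 0) = 0.
Proof. by rewrite /int_local integral0_eq ?mulr0. Qed.

Lemma alpha_ge0 (R : realType) (mu nu : probability R R) k m :
  0 <= alpha mu nu k m.
Proof.
apply: le_trans (alpha_ub mu nu k m (W1_0 R)).
by rewrite !int_local0 subrr normr0.
Qed.

Section T1sec.
Variables (R : realType) (c : nat -> nat) (psi : nat -> R -> R) (L : nat -> R) (M : R).
Hypothesis H : Hyp c psi L M.

Lemma phi_W1 k : L k != 0 ->
  W1_test (fun y : R => 2 ^+ k / L k * psi k ((y + (c k)%:R) / 2 ^+ k)).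
Proof.
move=> Lk0.
have Lk : 0 < L k by rewrite lt_neqAle eq_sym Lk0 (lip_ge0 (h_lip H k)).
have t0 : 0 < (2 : R) ^+ k by rewrite exprn_gt0.
split.
- move=> x y; rewrite -mulrBr normrM ger0_norm; last by rewrite divr_ge0 // ltW.
  apply: le_trans (ler_wpM2l _ (h_lip H k _ _)) _; first by rewrite divr_ge0 // ltW.
  rewrite -mulrBl opprD addrACA subrr addr0 normrM [`|(2 ^+ k)^-1|]ger0_norm ?invr_ge0 ?exprn_ge0 //.
  rewrite le_eqVlt; apply/orP; left; apply/eqP; field; rewrite ?gt_eqF //; exact: Lk0.
- move=> y hy; rewrite (h_supp H) ?mulr0 // => /closure_dyadic /=.
  rewrite in_itv /= !ler_pM2r ?invr_gt0 // => /andP[h1 h2]; apply: hy.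
  rewrite -natr1 in h2; apply/andP; split; lra.
Qed.

Lemma phi_local (mu : probability R R) k : L k != 0 ->
  int_local mu k (c k) (fun y : R => 2 ^+ k / L k * psi k ((y + (c k)%:R) / 2 ^+ k))
  = (mR mu (dyadic k (c k)))^-1 * (2 ^+ k / L k * intR mu (psi k)).
Proof.
move=> Lk0.
have Lk : 0 < L k by rewrite lt_neqAle eq_sym Lk0 (lip_ge0 (h_lip H k)).
have t0 : 0 < (2 : R) ^+ k by rewrite exprn_gt0.
rewrite /int_local; congr (_ * _).
have mI := dyadic_meas (R:=R) k (c k).
under eq_integral => x _ do
  rewrite subrK [_ * x]mulrC mulfK ?gt_eqF // EFinM.
rewrite ge0_integralZl //.
- have [-> _] := int_off mu mI (psi_meas H k) (psi_bd H k) (psi_off H (k:=k)).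
  by have [-> _] := int_fin mu (psi_meas H k) (psi_bd H k).
- by apply/measurable_EFinP; exact: (measurable_funS measurableT _ (psi_meas H k)).
- by move=> x _; rewrite lee_fin (h_pos H).
- by rewrite lee_fin divr_ge0 // ltW.
Qed.


Lemma psi_zero_L k : L k = 0 -> psi k = fun _ => 0.
Proof.
move=> L0; apply/funext => x.
have e : psi k x = psi k 2.
  by apply/eqP; rewrite -subr_eq0 -normr_eq0 eq_le normr_ge0 andbT; have := h_lip H k x 2; rewrite L0 mul0r.
rewrite e (psi_off H) // /dyadic /= => /andP[_]; apply/negP; rewrite -leNgt.
have ck := h_c H k.
apply: (@le_trans _ _ 1); last by lra.
rewrite ler_pdivrMr ?exprn_gt0 // mul1r -natrX ler_nat; exact: ck.
Qed.

Lemma intR0 (mu : probability R R) : intR mu (fun _ => 0) = 0.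
Proof. by rewrite /intR integral0_eq. Qed.

Lemma t1_bound (mu nu : probability R R) k : 0 < mR nu (dyadic k (c k)) ->
  `|intR mu (psi k) - mR mu (dyadic k (c k)) / mR nu (dyadic k (c k)) * intR nu (psi k)|
  <= L k / 2 ^+ k * alpha mu nu k (c k) * mR mu (dyadic k (c k)).
Proof.
move=> b0.
set a := mR mu (dyadic k (c k)); set b := mR nu (dyadic k (c k)).
have a0 : 0 <= a by exact: mR_ge0.
have t0 : 0 < (2 : R) ^+ k by rewrite exprn_gt0.
have [L0|Lk0] := eqVneq (L k) 0.
  by rewrite (psi_zero_L L0) !intR0 mulr0 subrr normr0 L0 !mul0r.
have Lk : 0 < L k by rewrite lt_neqAle eq_sym Lk0 (lip_ge0 (h_lip H k)).
have mI := dyadic_meas (R:=R) k (c k).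
have [a00|an0] := eqVneq a 0.
  have [_ hq] := int_off mu mI (psi_meas H k) (psi_bd H k) (psi_off H (k:=k)).
  have [_ hq0] := int_fin mu (psi_meas H k) (psi_bd H k).
  rewrite -/a a00 mulr0 in hq.
  have -> : intR mu (psi k) = 0 by apply/eqP; rewrite eq_le hq hq0.
  by rewrite a00 !mul0r mulr0 subrr normr0.
have ap : 0 < a by rewrite lt_neqAle eq_sym an0.
have := alpha_ub mu nu k (c k) (phi_W1 Lk0).
rewrite !phi_local // -/a -/b.
set qm := intR mu (psi k); set qn := intR nu (psi k).
have -> : a^-1 * (2 ^+ k / L k * qm) - b^-1 * (2 ^+ k / L k * qn)
  = 2 ^+ k / L k * (qm / a - qn / b) by field; rewrite ?gt_eqF.
have -> : qm - a / b * qn = a * (qm / a - qn / b) by field; rewrite ?gt_eqF.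
have Li : 0 <= (L k)^-1 by rewrite invr_ge0 ltW.
rewrite !normrM (ger0_norm a0) (ger0_norm (ltW t0)) (ger0_norm Li) => h.
have r0 : 0 < 2 ^+ k * (L k)^-1 by rewrite mulr_gt0 // invr_gt0.
rewrite -ler_pdivlMl // invfM invrK in h.
rewrite mulrC; apply: ler_wpM2r => //; apply: le_trans h _.
by rewrite [_ * L k]mulrC.
Qed.

End T1sec.

Lemma dy_ends (R : realType) k m :
  (m%:R / 2 ^+ k = (m.*2)%:R / 2 ^+ k.+1 :> R) /\
  (m.+1%:R / 2 ^+ k = (m.*2).+2%:R / 2 ^+ k.+1 :> R).
Proof.
have t0 : (2 : R) ^+ k != 0 by rewrite gt_eqF // exprn_gt0.
split.
  rewrite exprS -muln2 natrM; field; by rewrite t0.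
rewrite exprS (_ : (m.*2).+2 = (m.+1).*2)%N; last by rewrite doubleS.
rewrite -muln2 natrM; field; by rewrite t0.
Qed.

Lemma dy_split (R : realType) k m :
  dyadic (R:=R) k m = dyadic k.+1 m.*2 `|` dyadic k.+1 (m.*2).+1.
Proof.
have [e1 e2] := dy_ends R k m.
apply/seteqP; split => x; rewrite /dyadic /= e1 e2.
  move=> /andP[h1 h2]; case: (ltP x ((m.*2).+1%:R / 2 ^+ k.+1)) => h3.
    by left; rewrite /dyadic /= h1.
  by right; rewrite /dyadic /= h2.
have t0 : 0 < ((2 : R) ^+ k.+1)^-1 by rewrite invr_gt0 exprn_gt0.
have l1 : (m.*2)%:R / 2 ^+ k.+1 <= (m.*2).+1%:R / 2 ^+ k.+1 :> R.
  by rewrite ler_pM2r // ler_nat.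
have l2 : (m.*2).+1%:R / 2 ^+ k.+1 <= (m.*2).+2%:R / 2 ^+ k.+1 :> R.
  by rewrite ler_pM2r // ler_nat.
case=> /andP[h1 h2]; apply/andP; split.
- exact: h1.
- exact: lt_le_trans h2 l2.
- exact: le_trans l1 h1.
- exact: h2.
Qed.

Lemma dy_disj (R : realType) k m :
  dyadic (R:=R) k.+1 m.*2 `&` dyadic k.+1 (m.*2).+1 = set0.
Proof.
apply/seteqP; split => x //= [/andP[_ h1] /andP[h2 _]].
by move: (lt_le_trans h1 h2); rewrite ltxx.
Qed.

Lemma mR_split (R : realType) (mu : probability R R) k m :
  mR mu (dyadic k m) = mR mu (dyadic k.+1 m.*2) + mR mu (dyadic k.+1 (m.*2).+1).
Proof.
apply: EFin_inj; rewrite EFinD !mRE ?dyadic_meas //.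
have h := measureU mu (dyadic_meas (R:=R) k.+1 m.*2) (dyadic_meas (R:=R) k.+1 (m.*2).+1) (dy_disj R k m).
rewrite -dy_split in h; first exact: h.
all: exact: dyadic_meas.
Qed.

Lemma c_step (R : realType) (c : nat -> nat) (psi : nat -> R -> R) (L : nat -> R) (M : R)
  (H : Hyp c psi L M) j : c j.+1 = (c j).*2 \/ c j.+1 = (c j).*2.+1.
Proof.
set C := c j; set C' := c j.+1.
have t0 : 0 < ((2 : R) ^+ j)^-1 by rewrite invr_gt0 exprn_gt0.
have x0 : dyadic (R:=R) j.+1 C' (C'%:R / 2 ^+ j.+1).
  by rewrite /dyadic /= lexx /= ltr_pM2r ?invr_gt0 ?exprn_gt0 // ltr_nat.
have := h_nest H x0; rewrite /dyadic /=.
have e : C'%:R / 2 ^+ j.+1 = (C'%:R / 2) / 2 ^+ j :> R by rewrite exprS invfM mulrA.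
rewrite e ler_pM2r // ltr_pM2r // => /andP[h1 h2].
have h3 : ((C.*2)%:R <= C'%:R :> R) by rewrite -muln2 natrM; lra.
have h4 : (C'%:R < (C.*2).+2%:R :> R).
  rewrite -[(c j).+1%:R]natr1 in h2; rewrite -muln2 -addn2 natrD natrM; lra.
rewrite ler_nat in h3; rewrite ltr_nat in h4.
move: h3 h4; rewrite -!muln2; lia.
Qed.

Lemma mR_step (R : realType) (c : nat -> nat) (psi : nat -> R -> R) (L : nat -> R) (M : R)
  (H : Hyp c psi L M) (mu : probability R R) j :
  let a := mR mu (dyadic j (c j)) in
  let l := mR mu (dyadic j.+1 (c j).*2) in
  (mR mu (dyadic j.+1 (c j.+1)) = l \/ mR mu (dyadic j.+1 (c j.+1)) = a - l) /\
  ((c j.+1 = (c j).*2 /\ mR mu (dyadic j.+1 (c j.+1)) = l) \/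
   (c j.+1 = (c j).*2.+1 /\ mR mu (dyadic j.+1 (c j.+1)) = a - l)).
Proof.
move=> a l.
have sp : a = l + mR mu (dyadic j.+1 (c j).*2.+1) by exact: mR_split.
case: (c_step H j) => ce; rewrite ce.
  by split; [left | left; split].
have e : mR mu (dyadic j.+1 (c j).*2.+1) = a - l by rewrite sp; lra.
by split; [right | right; split].
Qed.

Lemma t2_alg (R : realType) (a a1 l b b1 lb P : R) :
  0 <= a1 <= a -> 0 < b -> 0 < b1 -> 0 <= P ->
  ((a1 = l /\ b1 = lb) \/ (a1 = a - l /\ b1 = b - lb)) ->
  `|(a1 / b1 - a / b) * P| <= (b1^-1 * P) * `|l / a - lb / b| * a.
Proof.
move=> /andP[a10 a1a] b0 b10 P0 hc.
have [a00|an0] := eqVneq a 0.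
  have -> : a1 = 0 by apply/eqP; rewrite eq_le a10 -a00 a1a.
  by rewrite a00 !mul0r subrr mul0r normr0 mulr0.
have ap : 0 < a by rewrite lt_neqAle eq_sym an0 (le_trans a10 a1a).
have bn : b != 0 by rewrite gt_eqF.
have b1n : b1 != 0 by rewrite gt_eqF.
have ab : 0 <= a / b1 by rewrite divr_ge0 ?ltW.
have fin : forall s : R, `|s| = 1 -> a1 / b1 - a / b = s * (a / b1 * (l / a - lb / b)) ->
   `|(a1 / b1 - a / b) * P| <= (b1^-1 * P) * `|l / a - lb / b| * a.
  move=> s s1 ->; rewrite normrM normrM normrM s1 mul1r (ger0_norm ab) (ger0_norm P0).
  rewrite le_eqVlt; apply/orP; left; apply/eqP; ring.
case: hc => [[e1 e2]|[e1 e2]].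
  apply: (fin 1); first by rewrite normr1.
  rewrite -e1 -e2; field; rewrite an0 bn b1n //.
apply: (fin (-1)); first by rewrite normrN normr1.
have -> : l = a - a1 by rewrite e1; ring.
have -> : lb = b - b1 by rewrite e2; ring.
field; rewrite an0 bn b1n //.
Qed.


Lemma nu_pos (R : realType) (c : nat -> nat) (psi : nat -> R -> R) (L : nat -> R) (M : R)
  (H : Hyp c psi L M) (nu : probability R R) (D : R) :
  nu (dyadic (R:=R) 0 0) = 1%E ->
  (forall k m : nat, (m < 2 ^ k.+1)%N ->
     (nu (dyadic (R:=R) k m./2) <= D%:E * nu (dyadic (R:=R) k.+1 m))%E) ->
  forall k, 0 < mR nu (dyadic k (c k)).
Proof.
move=> n1 hd; elim => [|k IH].
  have c0 : c 0 = 0%N by have := h_c H 0; rewrite expn0 ltnS leqn0 => /eqP.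
  by rewrite c0 /mR n1.
have h2 : (c k.+1)./2 = c k by case: (c_step H k) => ->; [rewrite doubleK | rewrite /= uphalf_double].
have hle0 := hd k (c k.+1) (h_c H k.+1); rewrite h2 in hle0.
have hle : mR nu (dyadic k (c k)) <= D * mR nu (dyadic k.+1 (c k.+1)).
  by rewrite -lee_fin EFinM !mRE //; apply: dyadic_meas.
rewrite lt_neqAle mR_ge0 andbT; apply/eqP => e.
by move: hle; rewrite -e mulr0 leNgt IH.
Qed.

Section Main.
Variables (R : realType) (c : nat -> nat) (psi : nat -> R -> R) (L : nat -> R) (M : R).
Hypothesis H : Hyp c psi L M.
Variables (mu nu : probability R R) (S : R).
Hypothesis hS : forall x, Psi_from psi 0 x <= S.
Hypothesis bpos : forall k, 0 < mR nu (dyadic k (c k)).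

Let a k := mR mu (dyadic k (c k)).
Let b k := mR nu (dyadic k (c k)).
Let Pm k := intR mu (Psi_from psi k).
Let Pn k := intR nu (Psi_from psi k).
Let Qm k := intR mu (psi k).
Let Qn k := intR nu (psi k).
Let r k := a k / b k.
Let A k := Pm k - r k * Pn k.

Lemma PsiS k x : 0 <= Psi_from psi k x <= S.
Proof.
by case/andP: (Psi_le0 H k x) => -> h /=; apply: le_trans h (hS x).
Qed.

Lemma psiS k x : 0 <= psi k x <= S.
Proof.
rewrite (h_pos H) /=; case/andP: (PsiS k x) => _; apply: le_trans.
by rewrite (Psi_step H) lerDl; case/andP: (PsiS k.+1 x).
Qed.

Lemma P_step (m : probability R R) k :
  intR m (Psi_from psi k) = intR m (psi k) + intR m (Psi_from psi k.+1).
Proof.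
apply: (int_add m (psi_meas H k) (Psi_meas H k.+1) (psiS k) (PsiS k.+1)).
exact: Psi_step H k.
Qed.

Lemma P_bd (m : probability R R) k :
  0 <= intR m (Psi_from psi k) <= S * mR m (dyadic k (c k)).
Proof.
have [_ h2] := int_off m (dyadic_meas (R:=R) k (c k)) (Psi_meas H k) (PsiS k) (Psi_off H (k:=k)).
have [_ h1] := int_fin m (Psi_meas H k) (PsiS k).
by rewrite h1 h2.
Qed.

Lemma A_step k :
  `|A k| <= L k / 2 ^+ k * alpha mu nu k (c k) * a k
     + ((b k.+1)^-1 * Pn k.+1) * Delta mu nu k (c k) * a k + `|A k.+1|.
Proof.
have e : A k = (Qm k - r k * Qn k) + (r k.+1 - r k) * Pn k.+1 + A k.+1.
  rewrite /A /Pm /Pn (P_step mu k) (P_step nu k) -/(Pm k.+1) -/(Pn k.+1) -/(Qm k) -/(Qn k).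
  ring.
rewrite e; apply: (le_trans (ler_normD _ _)); apply: lerD => //.
apply: (le_trans (ler_normD _ _)); apply: lerD.
  exact: t1_bound H mu nu k (bpos k).
rewrite /Delta /r.
set l := mR mu (dyadic k.+1 (c k).*2); set lb := mR nu (dyadic k.+1 (c k).*2).
have sm := mR_split mu k (c k); have sn := mR_split nu k (c k).
have l0 : 0 <= l by exact: mR_ge0.
have r0 : 0 <= mR mu (dyadic k.+1 (c k).*2.+1) by exact: mR_ge0.
have cs : (a k.+1 = l /\ b k.+1 = lb) \/ (a k.+1 = a k - l /\ b k.+1 = b k - lb).
  rewrite /a /b; case: (c_step H k) => ->; [left | right]; split => //.
    rewrite sm -/l; lra.
  rewrite sn -/lb; lra.
apply: t2_alg => //.
- case: cs => [[-> _]|[-> _]]; rewrite /a sm -/l; apply/andP; split; lra.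
- exact: bpos.
- exact: bpos.
- by case/andP: (P_bd nu k.+1).
Qed.


Lemma A_sum n : `|A 0| <= \sum_(0 <= k < n) (L k / 2 ^+ k * alpha mu nu k (c k) * a k
     + ((b k.+1)^-1 * Pn k.+1) * Delta mu nu k (c k) * a k) + `|A n|.
Proof.
elim: n => [|n IH]; first by rewrite big_geq // add0r.
apply: (le_trans IH); rewrite big_nat_recr //= -addrA lerD2l.
exact: A_step.
Qed.

Lemma A_end n : `|A n| <= 2 * S * a n.
Proof.
have [p0 p1] := andP (P_bd mu n); have [q0 q1] := andP (P_bd nu n).
have a0 : 0 <= a n by exact: mR_ge0.
have bp := bpos n.
rewrite /A; apply: (le_trans (ler_normB _ _)).
rewrite (ger0_norm p0) normrM (ger0_norm q0) ger0_norm; last by rewrite divr_ge0 // ltW.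
have : a n / b n * Pn n <= a n / b n * (S * b n) by apply: ler_wpM2l => //; rewrite divr_ge0 // ltW.
rewrite (_ : a n / b n * (S * b n) = S * a n); last by field; rewrite gt_eqF.
rewrite /Pm -/(a n) in p1; rewrite /r /Pn; lra.
Qed.

End Main.
Unset Implicit Arguments.

Theorem mainTheorem13 (R : realType) (mu nu : probability R R) (D : R)
  (c : nat -> nat) (psi : nat -> R -> R) (L : nat -> R) :
  (* mu, nu are concentrated on [0,1) *)
  mu (dyadic (R:=R) 0 0) = 1%E -> nu (dyadic (R:=R) 0 0) = 1%E ->
  (* nu is dyadically doubling: nu(parent I) <= D nu(I), I <> [0,1) *)
  (forall k m : nat, (m < 2 ^ k.+1)%N ->
     (nu (dyadic (R:=R) k m./2) <= D%:E * nu (dyadic (R:=R) k.+1 m))%E) ->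
  (* nested dyadic intervals I_j = dyadic j (c j) of length 2^-j *)
  (forall j, (c j < 2 ^ j)%N) ->
  (forall j, dyadic (R:=R) j.+1 (c j.+1) `<=` dyadic (R:=R) j (c j)) ->
  (* psi_j >= 0, L_j-Lipschitz, supported on the closure of I_j *)
  (forall j x, 0 <= psi j x) ->
  (forall j x y, `|psi j x - psi j y| <= L j * `|x - y|) ->
  (forall j x, ~ closure (dyadic (R:=R) j (c j)) x -> psi j x = 0) ->
  (* Psi = sum_j psi_j is bounded *)
  (exists M : R, forall x, (\sum_(0 <= j <oo) (psi j x)%:E <= M%:E)%E) ->
  let Psi := Psi_from psi 0 in
  let I k := dyadic (R:=R) k (c k) in
  let t1 k := L k / 2 ^+ k * alpha mu nu k (c k) * mR mu (I k) in
  let t2 k := ((mR nu (I k.+1))^-1 * intR nu (Psi_from psi k.+1))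
              * Delta mu nu k (c k) * mR mu (I k) in
  (forall N : nat,
     `|intR mu Psi - intR nu Psi|
       <= \sum_(0 <= k < N.+1) t1 k + \sum_(0 <= k < N.+1) t2 k
          + 2 * supnorm Psi * mR mu (I N.+1))
  /\
  ((`|intR mu Psi - intR nu Psi|)%:E
     <= \sum_(0 <= k <oo) (t1 k)%:E + \sum_(0 <= k <oo) (t2 k)%:E
        + (2 * supnorm Psi * mR mu (\bigcap_j I j))%:E)%E.
Proof.
move=> hmu hnu hdoub hc hnest hpos hlip hsupp [M hM] Psi I t1 t2.
have H : Hyp c psi L M := Build_Hyp hc hnest hpos hlip hsupp hM.
set S := supnorm Psi.
have hS : forall x, Psi_from psi 0 x <= S.
  move=> x; apply: le_trans (ler_norm _) _; apply: ub_le_sup; last by exists x.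
  exists M => _ [y _ <-]; rewrite ger0_norm; case/andP: (Psi_bd H 0 y) => //.
have bpos := nu_pos H hnu hdoub.
have c0 : c 0 = 0%N by have := hc 0; rewrite expn0 ltnS leqn0 => /eqP.
have a0 : mR mu (dyadic 0 (c 0)) = 1 by rewrite c0 /mR hmu.
have b0 : mR nu (dyadic 0 (c 0)) = 1 by rewrite c0 /mR hnu.
have fin N : `|intR mu Psi - intR nu Psi|
       <= \sum_(0 <= k < N.+1) t1 k + \sum_(0 <= k < N.+1) t2 k
          + 2 * S * mR mu (I N.+1).
  have h1 := A_sum H mu hS bpos N.+1; have h2 := A_end H mu hS bpos N.+1.
  rewrite /= a0 b0 divr1 mul1r in h1 h2.
  rewrite -big_split /=; apply: le_trans h1 _; rewrite lerD2l; exact: h2.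
split => //.
have t1_0 k : 0 <= t1 k.
  rewrite /t1 mulr_ge0 ?mR_ge0 // mulr_ge0 ?alpha_ge0 // divr_ge0 ?exprn_ge0 //.
  exact: (lip_ge0 (hlip k)).
have t2_0 k : 0 <= t2 k.
  rewrite /t2 mulr_ge0 ?mR_ge0 // mulr_ge0 ?normr_ge0 // mulr_ge0 ?invr_ge0 ?mR_ge0 //.
  by case/andP: (P_bd H hS nu k.+1).
set s1 := (\sum_(0 <= k <oo) (t1 k)%:E)%E.
set s2 := (\sum_(0 <= k <oo) (t2 k)%:E)%E.
have s1ge N : ((\sum_(0 <= k < N.+1) t1 k)%:E <= s1)%E.
  by rewrite -sumEFin; apply: nneseries_lim_ge => k _ _; rewrite lee_fin.
have s2ge N : ((\sum_(0 <= k < N.+1) t2 k)%:E <= s2)%E.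
  by rewrite -sumEFin; apply: nneseries_lim_ge => k _ _; rewrite lee_fin.
have s0 : (0 <= s1 + s2)%E.
  by rewrite adde_ge0 // nneseries_ge0 // => k _ _; rewrite lee_fin.
have mI k : measurable (I k) by exact: dyadic_meas.
have mcap : measurable (\bigcap_j I j) by exact: bigcapT_measurable.
have cv : (fun n => mu (I n)) @ \oo --> mu (\bigcap_j I j).
  apply: nonincreasing_cvg_mu => //.
    by rewrite (le_lt_trans (probability_le1 _ _)) ?ltry.
  move=> n m nm; apply/subsetPset; exact: (nested H nm).
have S0 : 0 <= S by apply: le_trans (hS 0); case/andP: (Psi_le0 H 0 0).
have cv2 : (fun n => s1 + s2 + (2 * S)%:E * mu (I n))%E @ \oo -->
           (s1 + s2 + (2 * S)%:E * mu (\bigcap_j I j))%E.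
  apply: cvgeD.
  - apply: ge0_adde_def; rewrite inE //.
    by rewrite mule_ge0 // lee_fin mulr_ge0.
  - exact: cvg_cst.
  - exact: cvgeZl.
rewrite EFinM mRE //.
rewrite -(cvg_lim _ cv2) //; apply: lime_ge; first by apply/cvg_ex; eexists; exact: cv2.
exists 1%N => // n /= n1.
have [N ->] : exists N, n = N.+1 by exists n.-1; rewrite prednK.
apply: (le_trans (_ : _ <= (\sum_(0 <= k < N.+1) t1 k + \sum_(0 <= k < N.+1) t2 k
          + 2 * S * mR mu (I N.+1))%:E)%E); first by rewrite lee_fin.
rewrite !EFinD EFinM mRE //.
by apply: leeD => //; apply: leeD.
Qed.
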